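(* Let $(G=(V,E),(p_e))$ be an IC model instance, $S\subseteq V$ with $S\neq V$, $\phi$ a realization, and $t\in\mathbb{Z}^+$. Let $\mathcal R$ be an RR-set generated with input $S,\phi,t$. Then for every $V^*\subseteq V$, \[(|V|-|S|)\cdot\mathbb{E}[\mathbb{I}(V^*\cap\mathcal R)]=\Delta f_t(S,V^*,\phi),\] where $\mathbb{I}(V^*\cap\mathcal R)=1$ if $V^*\cap\mathcal R\neq\emptyset$ and $0$ otherwise.
   Context: IC model: directed graph $G=(V,E)$, each edge $e$ independently live with probability $p_e\in(0,1]$. A realization is a pair $\phi=(L(\phi),D(\phi))$ of disjoint edge sets (known live, known dead edges); it is full if $L(\phi)\cup D(\phi)=E$; $\Psi$ is the set of full realizations. $\phi\prec\psi$ means $L(\phi)\subseteq L(\psi)$, $D(\phi)\subseteq D(\psi)$, and $\Pr[\psi\mid\phi]=\prod_{e\in L(\psi)\setminus L(\phi)}p_e\prod_{e\in D(\psi)\setminus D(\phi)}(1-p_e)$. For $S\subseteq V$ and full $\psi$, $A_t(S,\psi)$ is the set of nodes reachable from some node of $S$ via a path of at most $t$ edges all in $L(\psi)$. $\Delta_t(S,V^*,\psi)=|A_t(S\cup V^*,\psi)|-|A_t(S,\psi)|$ and $\Delta f_t(S,V^*,\phi)=\sum_{\psi\in\Psi,\phi\prec\psi}\Pr[\psi\mid\phi]\Delta_t(S,V^*,\psi)$. RR-set with input $S,\phi,t$: (1) for each edge not in $L(\phi)\cup D(\phi)$ sample its state independently (live w.p. $p_e$), keeping the states given by $\phi$ for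 the others, obtaining a full realization $\psi^*$; (2) choose a node $v\notin S$ uniformly at random and let $R_v$ be the set of nodes from which $v$ is reachable via a path of at most $t$ edges all live in $\psi^*$ (including $v$ itself); return $\mathcal R=R_v$ if $R_v\cap S=\emptyset$, and $\mathcal R=\emptyset$ otherwise. *)

(* Defs.v *)
From mathcomp Require Import all_boot all_order all_algebra.
Set Implicit Arguments. Unset Strict Implicit. Unset Printing Implicit Defensive.
Import Order.TTheory GRing.Theory Num.Theory.
Local Open Scope ring_scope.

Section IC.
Variables (V : finType) (R : realFieldType).
Notation edge := (V * V)%type.

(* A realization: a pair (L, D) of (known live, known dead) edge sets. *)
Definition realization := ({set edge} * {set edge})%type.

Definition is_realization (E : {set edge}) (phi : realization) : bool :=
  [&& phi.1 \subset E, phi.2 \subset E & [disjoint phi.1 & phi.2]].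

Definition is_full (E : {set edge}) (psi : realization) : bool :=
  is_realization E psi && (psi.1 :|: psi.2 == E).

Definition cond_pr (p : edge -> R) (phi psi : realization) : R :=
  (\prod_(e in psi.1 :\: phi.1) p e) * (\prod_(e in psi.2 :\: phi.2) (1 - p e)).

Definition prec (phi psi : realization) : bool :=
  (phi.1 \subset psi.1) && (phi.2 \subset psi.2).

Fixpoint reach (L : {set edge}) (t : nat) (X : {set V}) : {set V} :=
  match t with
  | 0 => X
  | t'.+1 => let Y := reach L t' X in
             Y :|: [set v | [exists u in Y, (u, v) \in L]]
  end.

Definition At (t : nat) (S : {set V}) (psi : realization) : {set V} :=
  reach psi.1 t S.

Definition Delta_t (t : nat) (S Vs : {set V}) (psi : realization) : R :=
  (#|At t (S :|: Vs) psi|)%:R - (#|At t S psi|)%:R.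

Definition Delta_f (E : {set edge}) (p : edge -> R) (t : nat) (S Vs : {set V})
  (phi : realization) : R :=
  \sum_(psi : realization | is_full E psi && prec phi psi)
     cond_pr p phi psi * Delta_t t S Vs psi.

Definition Rv (t : nat) (psi : realization) (v : V) : {set V} :=
  [set u | v \in reach psi.1 t [set u]].

Definition RRset (t : nat) (S : {set V}) (psi : realization) (v : V) : {set V} :=
  if [disjoint Rv t psi v & S] then Rv t psi v else set0.

(* Expectation of I(V* ∩ RR) where the RR set is generated with input S, phi, t:
   (1) every edge e in E \ (L(phi) ∪ D(phi)) is independently live w.p. p e;
       X denotes the set of sampled live edges, giving
       psi* = (L(phi) ∪ X, D(phi) ∪ (free \ X));
   (2) v is uniform in V \ S. *)
Definition RR_expect (E : {set edge}) (p : edge -> R) (t : nat) (S Vs : {set V})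
  (phi : realization) : R :=
  let free := E :\: (phi.1 :|: phi.2) in
  \sum_(X : {set edge} | X \subset free)
    (\prod_(e in free) (if e \in X then p e else 1 - p e)) *
    (\sum_(v in ~: S)
       (#|~: S|%:R)^-1 *
       (if Vs :&: RRset t S (phi.1 :|: X, phi.2 :|: (free :\: X)) v != set0
        then 1 else 0)).

End IC.

(* Main.v *)
Require Import Defs.
From mathcomp Require Import all_boot all_order all_algebra.
Import Order.TTheory GRing.Theory Num.Theory.
Local Open Scope ring_scope.

Section Aux.
Variable V : finType.

Lemma reach_union (L : {set V * V}) t (X : {set V}) v :
  (v \in reach L t X) = [exists u in X, v \in reach L t [set u]].
Proof.
elim: t v => [|t IH] v /=.
  apply/idP/existsP.
    by move=> Hv; exists v; rewrite Hv inE eqxx.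
  by case=> u /andP[Hu]; rewrite inE => /eqP ->.
rewrite !inE IH; apply/idP/existsP.
- case/orP => [/existsP[u /andP[Hu H]]|/existsP[w /andP[Hw Hl]]].
    by exists u; rewrite Hu inE H.
  move: Hw; rewrite IH => /existsP[u /andP[Hu Hw]].
  exists u; rewrite Hu !inE; apply/orP; right; apply/existsP; exists w.
  by rewrite Hw.
- case=> u /andP[Hu]; rewrite !inE => /orP[H|/existsP[w /andP[Hw Hl]]].
    by apply/orP; left; apply/existsP; exists u; rewrite Hu.
  apply/orP; right; apply/existsP; exists w; rewrite Hl andbT IH.
  by apply/existsP; exists u; rewrite Hu.
Qed.

Lemma reach_ext (L : {set V * V}) t (X : {set V}) v : v \in X -> v \in reach L t X.
Proof. by move=> Hv; rewrite reach_union; apply/existsP; exists v; rewrite Hv /=; elim: t => [|t IH] /=; rewrite ?inE ?IH. Qed.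

End Aux.

Lemma disjP (T : finType) (A B : {set T}) :
  reflect (forall x, x \in A -> x \in B -> False) [disjoint A & B].
Proof.
rewrite disjoints_subset; apply: (iffP subsetP) => H x Ha.
  by move=> Hb; move: (H x Ha); rewrite inE Hb.
by rewrite inE; apply/negP; exact: H x Ha.
Qed.

Lemma delta_count (V : finType) (R : realFieldType) t (S Vs : {set V}) (psi : realization V) :
  Delta_t R t S Vs psi =
  \sum_(v in ~:S) (if Vs :&: RRset t S psi v != set0 then 1 else 0 : R).
Proof.
rewrite /Delta_t /At.
set A := reach psi.1 t (S :|: Vs); set B := reach psi.1 t S.
have HU v : (v \in A) = (v \in B) || [exists u in Vs, v \in reach psi.1 t [set u]].
  rewrite /A /B !reach_union; apply/existsP/orP.
    case=> u /andP[]; rewrite inE => /orP[Hu|Hu] Hr; [left|right]; 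
      by apply/existsP; exists u; rewrite Hu.
  case=> /existsP[u /andP[Hu Hr]]; exists u; by rewrite inE Hu ?orbT.
have sub : B \subset A by apply/subsetP => v Hv; rewrite HU Hv.
rewrite -(cardsID B A) (setIidPr sub) natrD addrAC subrr add0r.
rewrite -big_mkcondr /=.
rewrite (eq_bigl (fun v => v \in A :\: B)); first by rewrite sumr_const.
move=> v /=.
have Hdis : [disjoint Rv t psi v & S] = (v \notin B).
  apply/disjP/idP.
    move=> H; rewrite /B reach_union; apply/negP => /existsP[u /andP[Hu Hr]].
    by apply: (H u) => //; rewrite inE.
  move=> H u; rewrite inE => Hr Hu; apply: (negP H); rewrite /B reach_union.
  by apply/existsP; exists u; rewrite Hu.
have Hne : (Vs :&: Rv t psi v != set0) = [exists u in Vs, v \in reach psi.1 t [set u]].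
  apply/set0Pn/existsP => [[u]|[u /andP[Hu Hr]]].
    by rewrite !inE => /andP[Hu Hr]; exists u; rewrite Hu.
  by exists u; rewrite !inE Hu.
rewrite /RRset Hdis inE [v \in A :\: B]inE HU.
case: (boolP (v \in B)) => HB /=.
  by rewrite setI0 eqxx andbF.
rewrite Hne.
have -> : v \notin S by apply/negP => Hs; apply: (negP HB); exact: reach_ext.
by [].
Qed.

Section Q.
Variable T : finType.
Implicit Types A B : {set T}.
Lemma subE A B : (A \subset B) = [forall e, (e \in A) ==> (e \in B)].
Proof. by apply/subsetP/forallP => H e; [apply/implyP; exact: H | exact/implyP/H]. Qed.
Lemma disjE A B : [disjoint A & B] = [forall e, ~~ ((e \in A) && (e \in B))].
Proof.
apply/disjP/forallP => H e; first by apply/negP => /andP[]; exact: H.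
by move=> Ha Hb; move: (H e); rewrite Ha Hb.
Qed.
Lemma eqsetE A B : (A == B) = [forall e, (e \in A) == (e \in B)].
Proof. by apply/eqP/forallP => [-> e|H]; [exact: eqxx | apply/setP => e; exact/eqP/H]. Qed.
Lemma andb_forall (P Q : pred T) :
  [forall e, P e] && [forall e, Q e] = [forall e, P e && Q e].
Proof.
apply/andP/forallP => [[/forallP H1 /forallP H2] e|H]; first by rewrite H1 H2.
by split; apply/forallP => e; case/andP: (H e).
Qed.
End Q.

Theorem lemma5 (V : finType) (R : realFieldType) (E : {set V * V})
  (p : V * V -> R) (hp : forall e, e \in E -> 0 < p e <= 1)
  (S : {set V}) (hS : S != [set: V])
  (phi : realization V) (hphi : is_realization E phi)
  (t : nat) (ht : (0 < t)%N) (Vs : {set V}) :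
  (#|V|%:R - #|S|%:R) * RR_expect E p t S Vs phi = Delta_f E p t S Vs phi.
Proof.
rewrite /Delta_f /RR_expect /=.
set free := E :\: (phi.1 :|: phi.2).
move: hphi; rewrite /is_realization !subE disjE !andb_forall => /forallP Hphi.
pose h X := (phi.1 :|: X, phi.2 :|: (free :\: X)) : realization V.
pose h' (psi : realization V) := psi.1 :\: phi.1.
rewrite (reindex_onto h h').
  2: { case=> L D; rewrite /is_full /is_realization /prec /= !subE disjE eqsetE !andb_forall.
       move/forallP => Hpsi; rewrite /h /h' /=; congr pair; apply/setP => e; 
       move: (Hpsi e) (Hphi e); rewrite !inE;
       case: (e \in L); case: (e \in D); case: (e \in E); case: (e \in phi.1); case: (e \in phi.2); done. }
rewrite [RHS](eq_bigl (fun X : {set V * V} => X \subset free)); last first.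
  move=> X; rewrite /is_full /is_realization /prec /h /h' /= !subE disjE !eqsetE !andb_forall.
  apply: eq_forallb => e; move: (Hphi e); rewrite !inE.
  case: (e \in X); case: (e \in E); case: (e \in phi.1); case: (e \in phi.2); done.
rewrite mulr_sumr; apply: eq_bigr => X HX.
have Hw : cond_pr p phi (h X) = \prod_(e in free) (if e \in X then p e else 1 - p e).
  move: HX; rewrite subE => /forallP HX.
  rewrite (bigID (fun e => e \in X)) /= /cond_pr /h /=; congr (_ * _).
    rewrite [RHS](eq_bigr (fun e => p e)) => [|e /andP[_ ->]//].
    apply: eq_bigl => e; move: (HX e) (Hphi e); rewrite !inE.
    case: (e \in X); case: (e \in E); case: (e \in phi.1); case: (e \in phi.2); done.
  rewrite [RHS](eq_bigr (fun e => 1 - p e)) => [|e /andP[_ /negbTE ->]//].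
  apply: eq_bigl => e; move: (HX e) (Hphi e); rewrite !inE.
  case: (e \in X); case: (e \in E); case: (e \in phi.1); case: (e \in phi.2); done.
rewrite delta_count Hw -mulr_sumr.
have Hn : #|V|%:R - #|S|%:R = #|~: S|%:R :> R.
  by rewrite -(cardsC S) natrD addrAC subrr add0r.
have Hn0 : #|~: S|%:R != 0 :> R.
  rewrite pnatr_eq0 -lt0n card_gt0; apply: contra hS => /eqP H0.
  by rewrite -(setCK S) H0 setC0.
by rewrite Hn mulrCA mulVKf.
Qed.
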